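(* Let $r\ge3$, $\alpha,\beta\in\mathcal S_r$, $\epsilon\in\{\pm1\}^r$, $\sigma=\sigma(\alpha,\beta,\epsilon)$, and let $A\in\mathcal P(r)$ satisfy $0_\sigma\le A$ and $A\vee0_\alpha\vee0_\beta=1_r$. Then $$-2r-\#(\sigma)+2\#(A)+\#(\alpha)+\#(\beta)+1\le0.$$
   Context: $\mathcal P(r)$: set partitions of $[r]$, ordered by refinement, join $\vee$, $1_r$ the one-block partition, $\#(A)$ number of blocks. For a permutation $\pi$, $0_\pi$ is the partition into cycles, $\#(\pi)$ the number of cycles. Index $[2r]$ as $\{1,\dots,r,\bar1,\dots,\bar r\}$; $H_r\subset\mathcal S_{2r}$ is the centralizer of $\gamma=\prod_i(i\ \bar i)$. For $\epsilon\in\{\pm1\}^r$, $\tau_\epsilon=\prod_{i:\epsilon_i=-1}(i\ \bar i)$; for $\pi\in\mathcal S_r$, $t_\pi(i)=i$, $t_\pi(\bar i)=\overline{\pi(i)}$. A pair $(\epsilon,\pi)$ is particular if for every cycle $c$ of $\pi$, $\epsilon_i=1$ at the smallest element $i$ of $c$. Every left coset $gH_r$ contains exactly one $\tau_{\epsilon'}t_\sigma$ with $(\epsilon',\sigma)$ particular; $\sigma(\alpha,\beta,\epsilon)$ denotes the $\sigma$ of the particular pair with $t_{\alpha^{-1}}\tau_\epsilon t_\beta\in\tau_{\epsilon'}t_\sigma H_r$. *)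

(* Defs.v *)
From HB Require Import structures.
From mathcomp Require Import all_boot all_order all_algebra all_fingroup.
Set Implicit Arguments. Unset Strict Implicit. Unset Printing Implicit Defensive.

(* [2r] is encoded as 'I_r + 'I_r : inl i = i, inr i = \bar i. *)
Definition T2 (r : nat) : finType := ('I_r + 'I_r)%type.

(* Paper's composition: (pcomp a b) x = a (b x).  (MathComp's a * b applies a first.) *)
Definition pcomp (U : finType) (a b : {perm U}) : {perm U} := (b * a)%g.

(* Signs eps in {+-1}^r are encoded as eps : 'I_r -> bool, with
   eps i = true  <->  eps_i = -1. *)

Definition gamma_fun r (x : T2 r) : T2 r :=
  match x with inl i => inr i | inr i => inl i end.
Lemma gamma_inj r : injective (@gamma_fun r).
Proof. by case=> i; case=> j //= [->]. Qed.
Definition gamma r : {perm T2 r} := perm (@gamma_inj r).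

Definition Hr r : {set {perm T2 r}} :=
  [set g : {perm T2 r} | pcomp g (gamma r) == pcomp (gamma r) g].

Definition tau_fun r (e : 'I_r -> bool) (x : T2 r) : T2 r :=
  match x with
  | inl i => if e i then inr i else inl i
  | inr i => if e i then inl i else inr i
  end.
Lemma tau_inj r e : injective (@tau_fun r e).
Proof.
case=> i; case=> j /=; case Ei: (e i); case Ej: (e j) => //= H; case: H => H;
  by subst; rewrite ?Ei in Ej.
Qed.
Definition tau r (e : 'I_r -> bool) : {perm T2 r} := perm (@tau_inj r e).

Definition t_fun r (p : {perm 'I_r}) (x : T2 r) : T2 r :=
  match x with inl i => inl i | inr i => inr (p i) end.
Lemma t_inj r p : injective (@t_fun r p).
Proof. by case=> i; case=> j //= [] // /perm_inj ->. Qed.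
Definition tperm2 r (p : {perm 'I_r}) : {perm T2 r} := perm (@t_inj r p).

Definition particular r (e : 'I_r -> bool) (p : {perm 'I_r}) : Prop :=
  forall i : 'I_r, (forall j, j \in porbit p i -> (i <= j)%N) -> e i = false.

Definition is_sigma r (a b : {perm 'I_r}) (e : 'I_r -> bool) (s : {perm 'I_r}) : Prop :=
  exists e' : 'I_r -> bool, particular e' s /\
    exists2 h, h \in Hr r &
      pcomp (tperm2 a^-1) (pcomp (tau e) (tperm2 b)) = pcomp (pcomp (tau e') (tperm2 s)) h.

Definition is_setpart r (A : {set {set 'I_r}}) : bool := partition A [set: 'I_r].
Definition refines r (A B : {set {set 'I_r}}) : bool :=
  [forall a in A, [exists b in B, a \subset b]].
Definition pjoin r (A B : {set {set 'I_r}}) : {set {set 'I_r}} :=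
  equivalence_partition
    (connect (fun x y => (pblock A x == pblock A y) || (pblock B x == pblock B y)))
    [set: 'I_r].
Definition one_part r : {set {set 'I_r}} := [set [set: 'I_r]].
Definition zero_part r (p : {perm 'I_r}) : {set {set 'I_r}} := porbits p.

(* Main.v *)
Require Import Defs.
From HB Require Import structures.
From mathcomp Require Import all_boot all_order all_algebra all_fingroup.
Import GRing.Theory Num.Theory.
From Stdlib Require Import Lia.
Set Implicit Arguments. Unset Strict Implicit. Unset Printing Implicit Defensive.

Section Graph.
Variable T : finType.
Implicit Types e : rel T.

Definition symr e : rel T := [rel u v | e u v || e v u].
Definition Nc e := n_comp (symr e) T.

Lemma symr_sym e : connect_sym (symr e).
Proof. by apply: sym_connect_sym => u v; rewrite /symr /= orbC. Qed.

Lemma Nc_count (S : finType) e (F : T -> S) :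
  (forall u v, connect (symr e) u v = (F u == F v)) -> Nc e = #|F @: T|.
Proof.
move=> HF; rewrite /Nc /n_comp_mem.
have ->: F @: T = F @: [set u | fingraph.roots (symr e) u].
  apply/setP=> z; apply/imsetP/imsetP=> [[u _ ->]|[u _ ->]]; last by exists u.
  exists (fingraph.root (symr e) u); first by rewrite inE fingraph.roots_root //; apply: symr_sym.
  by apply/eqP; rewrite -HF connect_root.
rewrite card_in_imset; last first.
  move=> u v; rewrite !inE => /eqP ru /eqP rv /eqP; rewrite -HF => c.
  move/(fingraph.rootP (symr_sym e)): c => c; by rewrite -[LHS]ru -[RHS]rv c.
by apply: eq_card => u; rewrite !inE andbT.
Qed.

Definition addE e (a b : T) : rel T := [rel u v | e u v || ((u == a) && (v == b))].

Lemma connect_mono e f : subrel e f -> subrel (connect e) (connect f).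
Proof. by move=> H; apply: connect_sub => u v /H; apply: connect1. Qed.

Lemma symr_mono e f : subrel e f -> subrel (symr e) (symr f).
Proof. by move=> H u v /orP[/H h|/H h]; apply/orP; [left|right]. Qed.

Lemma in_closure2 e' a b u z : connect e' u z -> (z == a) || (z == b) -> u \in closure e' (pred2 a b).
Proof. by move=> uz zab; apply/pred0Pn; exists z; rewrite /= !inE uz zab. Qed.

Lemma addE_key e a b u v :
  let C := closure (symr e) (pred2 a b) in
  connect (symr (addE e a b)) u v = connect (symr e) u v || ((u \in C) && (v \in C)).
Proof.
move=> C; have se := symr_sym e; have se' := symr_sym (addE e a b).
have sub: subrel (connect (symr e)) (connect (symr (addE e a b))).
  by apply/connect_mono/symr_mono => x y h; rewrite /addE /= h.
have cab: connect (symr (addE e a b)) a b by apply: connect1; rewrite /symr /addE /= !eqxx /= !orbT.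
have inC x : x \in C -> connect (symr (addE e a b)) x a.
  case/pred0Pn => z /andP[xz /pred2P[] zab]; subst z; first exact: sub.
  by apply: connect_trans (sub _ _ xz) _; rewrite se'.
apply/idP/idP; last first.
  case/orP=> [/sub //|/andP[/inC ua /inC va]].
  by apply: connect_trans ua _; rewrite se'.
pose Q := [pred w | connect (symr e) u w || ((u \in C) && (w \in C))].
have clQ : closed (symr (addE e a b)) Q.
  apply: intro_closed => // x y exy; rewrite !inE => /orP[ux|/andP[uC xC]].
    case/orP: exy => /= /orP[exy|/andP[/eqP ex /eqP ey]].
    - by rewrite (connect_trans ux) // connect1 // /symr /= exy.
    - have uC: u \in C by apply: (in_closure2 (z:=x)); rewrite // ex eqxx.
      by rewrite uC /= orbC; apply/orP; left; apply: (in_closure2 (z:=y)); rewrite // ey eqxx orbT.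
    - by rewrite (connect_trans ux) // connect1 // /symr /= exy orbT.
    - have uC: u \in C by apply: (in_closure2 (z:=x)); rewrite // ey eqxx orbT.
      by rewrite uC /= orbC; apply/orP; left; apply: (in_closure2 (z:=y)); rewrite // ex eqxx.
  rewrite uC /= orbC; apply/orP; left.
  case/orP: exy => /= /orP[exy|/andP[/eqP ex /eqP ey]].
  - by rewrite -(closure_closed se (pred2 a b) (x:=x) (y:=y)) // /symr /= exy.
  - by apply: (in_closure2 (z:=y)); rewrite // ey eqxx orbT.
  - by rewrite -(closure_closed se (pred2 a b) (x:=x) (y:=y)) // /symr /= exy orbT.
  - by apply: (in_closure2 (z:=y)); rewrite // ex eqxx.
by move=> uv; have := closed_connect clQ uv; rewrite !inE connect0 /= => <-.
Qed.

Lemma Nc_addE e a b : Nc (addE e a b) + ~~ connect (symr e) a b = Nc e.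
Proof.
have se := symr_sym e; have se' := symr_sym (addE e a b).
set C := closure (symr e) (pred2 a b).
rewrite /Nc (n_compC C) [n_comp (symr e) T](n_compC C) n_comp_closure2 //.
have aC : a \in C by apply: (mem_closure (symr e)); rewrite !inE eqxx.
have ->: n_comp (symr (addE e a b)) C = 1.
  rewrite -(n_comp_connect se' a); apply: eq_n_comp_r => u.
  rewrite inE /= addE_key -/C aC /=; case: (boolP (u \in C)) => uC; rewrite ?orbT //=.
  rewrite orbF; apply/esym/negbTE/negP => au; case/negP: uC.
  by apply: (in_closure2 (z:=a)); rewrite ?eqxx // se.
have ->: n_comp (symr (addE e a b)) [predC C] = n_comp (symr e) [predC C].
  apply: eq_card => u; rewrite !inE; case: (boolP (u \in C)) => uC; rewrite ?andbF //.
  rewrite !andbT /fingraph.roots /fingraph.root (@eq_pick _ (connect (symr (addE e a b)) u) (connect (symr e) u)) //.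
  by move=> v; rewrite addE_key -/C (negbTE uC) orbF.
by rewrite addnAC add1n.
Qed.

End Graph.
Lemma arith4 (a b b' c d d' : nat) (x y : bool) : b' + x = b -> d' + y = d -> (a + b <= c + d)%N -> (y -> x) -> (a + b' <= c + d')%N.
Proof. move=> E1 E2 /leP H1 H2; apply/leP. case: x y H2 E1 E2 H1 => [] [] //= H E1 E2 H1; rewrite -?plusE in E1 E2 H1 *; try lia. by have := H isT. Qed.

Section Graph2.
Variable T : finType.
Implicit Types e : rel T.

Lemma Nc_eq e f : e =2 f -> Nc e = Nc f.
Proof.
move=> ef; apply: eq_n_comp; apply: eq_connect => u v.
by rewrite /symr /= !ef.
Qed.

Lemma Nc_conn e f : (forall u v, connect (symr e) u v = connect (symr f) u v) -> Nc e = Nc f.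
Proof. by move=> ef; apply: eq_n_comp. Qed.

Definition addL e (s : seq (T * T)) : rel T := [rel u v | e u v || ((u, v) \in s)].

Lemma addL_cons e p s : addL e (p :: s) =2 addE (addL e s) p.1 p.2.
Proof.
move=> u v; rewrite /addL /addE /= in_cons; case: p => a b /=.
by rewrite xpair_eqE -orbA [((u, v) \in s) || _]orbC.
Qed.

Lemma addL_conn e f s :
  subrel (connect (symr e)) (connect (symr f)) ->
  subrel (connect (symr (addL e s))) (connect (symr (addL f s))).
Proof.
move=> ef; apply: connect_sub => u v /orP[] /orP[euv|suv].
- by apply: connect_mono (ef u v (connect1 _)); [apply: symr_mono => x y h; rewrite /addL /= h|rewrite /symr /= euv].
- by apply: connect1; rewrite /symr /addL /= suv orbT.
- rewrite symr_sym; apply: connect_mono (ef v u (connect1 _)); first by apply: symr_mono => x y h; rewrite /addL /= h.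
  by rewrite /symr /= euv.
- by apply: connect1; rewrite /symr /addL /= suv !orbT.
Qed.

Lemma Nc_submod e g s :
  subrel (connect (symr g)) (connect (symr e)) ->
  Nc e + Nc (addL g s) <= Nc g + Nc (addL e s).
Proof.
move=> ge; elim: s => [|[a b] s IH].
  have E0 f : Nc (addL f [::]) = Nc f by apply: Nc_eq => u v; rewrite /addL /= in_nil orbF.
  by rewrite !E0 addnC.
rewrite (Nc_eq (addL_cons g (a, b) s)) (Nc_eq (addL_cons e (a, b) s)) /=.
have Hg := Nc_addE (addL g s) a b; have He := Nc_addE (addL e s) a b.
have imp : connect (symr (addL g s)) a b -> connect (symr (addL e s)) a b.
  exact: addL_conn.
exact: (arith4 Hg He IH (contra imp)).
Qed.

End Graph2.

Lemma Nc_proj (T S : finType) (e : rel T) (k : rel S) (h : T -> S) (l : S -> T) (g : T -> T) :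
  (forall s, h (l s) = s) ->
  (forall u v, connect (symr k) (h u) (h v) -> connect (symr e) u v || connect (symr e) u (g v)) ->
  Nc e <= 2 * Nc k.
Proof.
move=> hl H; have se := symr_sym e; have sk := symr_sym k.
pose R := [set u | fingraph.roots (symr e) u].
pose RK := [set s | fingraph.roots (symr k) s].
have -> : Nc e = #|R| by apply: eq_card => u; rewrite !inE andbT.
have -> : Nc k = #|RK| by apply: eq_card => u; rewrite !inE andbT.
pose psi u := (fingraph.root (symr k) (h u), connect (symr e) u (l (fingraph.root (symr k) (h u)))).
have inj : {in R &, injective psi}.
  move=> u1 u2; rewrite !inE => /eqP r1 /eqP r2 [E1 E2].
  set w := l (fingraph.root (symr k) (h u1)).
  have E2' : connect (symr e) u1 w = connect (symr e) u2 w by rewrite /w E2 E1.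
  have hw : h w = fingraph.root (symr k) (h u1) by rewrite /w hl.
  have c1 : connect (symr k) (h u1) (h w) by rewrite hw connect_root.
  have c2 : connect (symr k) (h u2) (h w) by rewrite hw E1 connect_root.
  suff c12 : connect (symr e) u1 u2.
    by move/(fingraph.rootP se): c12; rewrite r1 r2.
  have := H _ _ c1; have := H _ _ c2.
  case c1w: (connect (symr e) u1 w) E2' => E2' /=.
    by move=> _ _; apply: connect_trans c1w _; rewrite se -E2'.
  rewrite -E2' /= => h2 h1.
  by apply: connect_trans h1 _; rewrite se.
have cb : #|[set: bool]| = 2 by rewrite cardsT card_bool.
rewrite -(card_in_imset inj) mulnC -cb -cardsX.
apply: subset_leq_card; apply/subsetP => _ /imsetP[u _ ->].
by rewrite !inE fingraph.roots_root.
Qed.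
Section Perms.
Variable T : finType.
Implicit Types (p q x y z : {perm T}).

Definition Ep p : rel T := [rel u v | v == p u].
Definition Exy x y : rel T := [rel u v | (v == x u) || (v == y u)].

Lemma conn_sub_sym (e f : rel T) :
  (forall u v, e u v -> connect (symr f) u v) ->
  subrel (connect (symr e)) (connect (symr f)).
Proof.
move=> H; apply: connect_sub => u v /orP[/H //|/H]; by rewrite symr_sym.
Qed.

Lemma porbit_conn q (e : rel T) : (forall w, connect e w (q w)) ->
  forall u v, v \in porbit q u -> connect e u v.
Proof.
move=> H u v /porbitP[i ->]; elim: i => [|i IH]; first by rewrite expg0 perm1.
by rewrite expgSr permM; apply: connect_trans IH (H _).
Qed.

Lemma Nc_porbits p : Nc (Ep p) = #|porbits p|.
Proof.
apply: Nc_count => u v; apply/idP/idP.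
  pose Q := [pred w | porbit p w == porbit p u].
  have clQ : closed (symr (Ep p)) Q.
    move=> x1 y1 /orP[] /eqP ->; rewrite !inE.
      by have := porbit_perm p 1 x1; rewrite expg1 => ->.
    by have := porbit_perm p 1 y1; rewrite expg1 => ->.
  by move=> c; have := closed_connect clQ c; rewrite !inE eqxx eq_sym => <-.
move/eqP=> E; apply: (porbit_conn (q:=p)); first by move=> w; apply: connect1; rewrite /symr /Ep /= eqxx.
by rewrite E porbit_id.
Qed.

Lemma porbits_le p : #|porbits p| <= #|T|.
Proof. exact: leq_imset_card. Qed.

Lemma porbitJ p z u : porbit (p ^ z)%g u = [set z w | w in porbit p (z^-1 u)%g].
Proof.
apply/setP => v; apply/porbitP/imsetP.
  case=> i ->; exists ((p ^+ i)%g (z^-1%g u)); first exact: mem_porbit.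
  by rewrite -conjXg -permJ permKV.
case=> w /porbitP[i ->] ->; exists i.
by rewrite -conjXg -permJ permKV.
Qed.

Lemma porbitsJ p z : #|porbits (p ^ z)%g| = #|porbits p|.
Proof.
have -> : porbits (p ^ z)%g = [set [set z w | w in O] | O : {set T} in porbits p].
  apply/setP => O; apply/imsetP/imsetP.
    case=> u _ ->; exists (porbit p (z^-1 u)%g); first by apply: imset_f.
    exact: porbitJ.
  case=> _ /imsetP[w _ ->] ->; exists (z w) => //.
  by rewrite porbitJ permK.
by rewrite card_imset //; apply: imset_inj; apply: perm_inj.
Qed.

Lemma conn_Exy1 y : Nc (Exy 1%g y) = Nc (Ep y).
Proof.
apply: Nc_conn => u v; apply/idP/idP; apply: conn_sub_sym => u1 v1.
  case/orP=> /eqP ->; last by apply: connect1; rewrite /symr /Ep /= eqxx.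
  by rewrite perm1.
by move=> /eqP ->; apply: connect1; rewrite /symr /Exy /= eqxx orbT.
Qed.

Lemma arith_gen (X ax ax' y xy xy' N N' : nat) (bc bn : bool) :
  ax' = ax + 1 -> xy + bc.*2 = xy' + 1 -> N + bn = N' -> (bc = false -> bn = false) ->
  ax' + y + xy' <= X + 2 * N' -> ax + y + xy <= X + 2 * N.
Proof.
move=> E1 E2 E3 E4 /leP H; apply/leP.
case: bc bn E2 E3 E4 => [] [] /= E2 E3 E4; rewrite -?addnn -?plusE -?multE in E1 E2 E3 H *;
  try (by have := E4 erefl); lia.
Qed.

Lemma genus x y :
  #|porbits x| + #|porbits y| + #|porbits (x * y)%g| <= #|T| + 2 * Nc (Exy x y).
Proof.
have [m] := ubnP (#|T| - #|porbits x|); elim: m x => // m IH x Hm.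
case: (pickP [pred a | x a != a]) => [a /= xa|fix1]; last first.
  have -> : x = 1%g by apply/permP => u; rewrite perm1; have := fix1 u; rewrite /= => /negbFE/eqP.
  rewrite mul1g conn_Exy1 Nc_porbits.
  by rewrite -addnA addnn -mul2n leq_add2r porbits_le.
set b := x a; set t := tperm a b; set x' := (t * x)%g.
have ab : a != b by rewrite eq_sym.
have E1 : #|porbits x'| = #|porbits x| + 1.
  have := porbits_mul_tperm x a b; rewrite -/t -/x' ab.
  have -> : a \in porbit x b by rewrite porbit_sym /b; have := mem_porbit x 1 a; rewrite expg1.
  by rewrite /= addn0 addn1 => ->.
have Exy_eq : (x * y = t * (x' * y))%g by rewrite /x' !mulgA tperm2 mul1g.
have E2 : #|porbits (x * y)%g| + (a \notin porbit (x' * y)%g b).*2 = #|porbits (x' * y)%g| + 1.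
  by rewrite Exy_eq /t; have := porbits_mul_tperm (x' * y)%g a b; rewrite ab.
have NE : Nc (Exy x y) = Nc (addE (Exy x' y) a b).
  have x'a : x' a = x b by rewrite /x' permM /t tpermL.
  have x'b : x' b = b by rewrite /x' permM /t tpermR.
  have x'u u : u != a -> u != b -> x' u = x u.
    by move=> ua ub; rewrite /x' permM /t tpermD // eq_sym.
  apply: Nc_conn => u v; apply/idP/idP; apply: conn_sub_sym => u1 v1.
    case/orP=> /eqP ->; last by apply: connect1; rewrite /symr /addE /Exy /= eqxx !orbT.
    case: (eqVneq u1 a) => [->|u1a].
      by apply: connect1; rewrite /symr /addE /Exy /= !eqxx !orbT.
    case: (eqVneq u1 b) => [->|u1b].
      apply: (connect_trans (y:=a)); first by apply: connect1; rewrite /symr /addE /Exy /= !eqxx !orbT.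
      by apply: connect1; rewrite /symr /addE /Exy /= -x'a eqxx.
    by apply: connect1; rewrite /symr /addE /Exy /= x'u // eqxx.
  case/orP=> [/orP[]|/andP[/eqP -> /eqP ->]]; last first.
  - by apply: connect1; rewrite /symr /Exy /= eqxx.
  - by move/eqP->; apply: connect1; rewrite /symr /Exy /= eqxx orbT.
  move/eqP ->; case: (eqVneq u1 a) => [->|u1a].
    apply: (connect_trans (y:=b)); first by apply: connect1; rewrite /symr /Exy /= eqxx.
    by rewrite x'a; apply: connect1; rewrite /symr /Exy /= eqxx.
  case: (eqVneq u1 b) => [->|u1b]; first by rewrite x'b.
  by apply: connect1; rewrite /symr /Exy /= x'u // eqxx.
have E3 := Nc_addE (Exy x' y) a b.
have E4 : (a \notin porbit (x' * y)%g b) = false ->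
   (~~ connect (symr (Exy x' y)) a b) = false.
  move/negbFE => ain; apply/negbF; rewrite symr_sym.
  apply: (porbit_conn (q := (x' * y)%g)) ain => w.
  apply: (connect_trans (y:=x' w)); apply: connect1; rewrite /symr /Exy /= ?permM eqxx ?orbT //.
rewrite NE; apply: (arith_gen E1 E2 E3 E4).
apply: IH; rewrite E1.
have le1 := porbits_le x'; rewrite E1 in le1.
apply/ltP; move/ltP: Hm; move/leP: le1; rewrite -?plusE -?minusE; lia.
Qed.

End Perms.
Section T2.
Variable r : nat.
Local Notation X := (T2 r).
Local Notation gam := (gamma r).
Local Notation tp := Defs.tperm2.
Implicit Types (p : {perm 'I_r}) (u : X) (e : 'I_r -> bool).

Definition pi (u : X) : 'I_r := match u with inl i => i | inr i => i end.
Definition Dfun (p : {perm 'I_r}) (u : X) : X :=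
  match u with inl i => inl (p i) | inr i => inr (p^-1%g i) end.
Lemma Dinj p : injective (Dfun p).
Proof. by case=> i; case=> j //= [] /perm_inj ->. Qed.
Definition Dp p : {perm X} := perm (@Dinj p).

Lemma DpE p u : Dp p u = Dfun p u. Proof. by rewrite permE. Qed.
Lemma gamE u : gam u = gamma_fun u. Proof. by rewrite permE. Qed.
Lemma tE p u : tp p u = t_fun p u. Proof. by rewrite permE. Qed.
Lemma tauE e u : tau e u = tau_fun e u. Proof. by rewrite permE. Qed.

Lemma t_inv p : tp (p^-1)%g = (tp p)^-1%g.
Proof.
apply/esym/eqP; rewrite eq_invg_mul; apply/eqP/permP => u.
by rewrite permM !tE perm1; case: u => i //=; rewrite permK.
Qed.

Lemma D1 p : Dp p = (gam ^ tp p * gam)%g.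
Proof.
apply/permP => u; rewrite conjgE -t_inv !permM DpE !tE !gamE.
by case: u => i //=; rewrite invgK.
Qed.

Lemma D2 p : Dp (p^-1)%g = (gam * gam ^ tp p)%g.
Proof.
apply/permP => u; rewrite conjgE -t_inv !permM DpE !tE !gamE.
by case: u => i //=; rewrite invgK.
Qed.

Lemma gam2 : (gam * gam = 1)%g.
Proof. by apply/permP => u; rewrite permM !gamE perm1; case: u. Qed.

Lemma gam_tau e : (gam ^ tau e = gam)%g.
Proof.
apply/permP => u; rewrite conjgE !permM !gamE.
have tt : tau e (tau e u) = u.
  by rewrite !tauE; case: u => i /=; case E: (e i); rewrite /= ?E.
have -> : (tau e)^-1%g u = tau e u by rewrite -{1}tt permK.
by rewrite !tauE; clear tt; case: u => i /=; case E: (e i); rewrite /= ?E.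
Qed.

Lemma gam_Hr h : h \in Hr r -> (gam ^ h = gam)%g.
Proof.
rewrite inE /Defs.pcomp => /eqP E; by rewrite conjgE E mulKg.
Qed.

Lemma Dinv p : ((Dp p)^-1 = Dp p^-1)%g.
Proof.
apply/eqP; rewrite eq_invg_mul; apply/eqP/permP => u.
by rewrite permM !DpE perm1; case: u => i /=; rewrite ?invgK ?permK ?permKV.
Qed.

End T2.
Section T2b.
Variable r : nat.
Local Notation X := (T2 r).
Implicit Types (p : {perm 'I_r}) (u : X).

Lemma DpX_l p n i : ((Dp p) ^+ n)%g (inl i : X) = inl ((p ^+ n)%g i).
Proof. elim: n => [|n IH]; first by rewrite !expg0 !perm1. by rewrite !expgSr !permM IH DpE. Qed.
Lemma DpX_r p n i : ((Dp p) ^+ n)%g (inr i : X) = inr (((p^-1) ^+ n)%g i).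
Proof. elim: n => [|n IH]; first by rewrite !expg0 !perm1. by rewrite !expgSr !permM IH DpE. Qed.

Lemma porbitD_l p i : porbit (Dp p) (inl i : X) = [set (inl j : X) | j in porbit p i].
Proof.
apply/setP => v; apply/porbitP/imsetP => [[n ->]|[j /porbitP[n ->] ->]].
  by exists ((p ^+ n)%g i); [apply: mem_porbit|rewrite DpX_l].
by exists n; rewrite DpX_l.
Qed.
Lemma porbitD_r p i : porbit (Dp p) (inr i : X) = [set (inr j : X) | j in porbit p i].
Proof.
rewrite -[porbit p i]porbitV.
apply/setP => v; apply/porbitP/imsetP => [[n ->]|[j /porbitP[n ->] ->]].
  by exists (((p^-1) ^+ n)%g i); [apply: mem_porbit|rewrite DpX_r].
by exists n; rewrite DpX_r.
Qed.

Lemma porbits_D p : #|porbits (Dp p)| = 2 * #|porbits p|.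
Proof.
have -> : porbits (Dp p) = [set [set (inl j : X) | j in O] | O : {set 'I_r} in porbits p]
                       :|: [set [set (inr j : X) | j in O] | O : {set 'I_r} in porbits p].
  apply/setP => O; rewrite inE; apply/imsetP/orP.
    case=> [[i|i]] _ ->; [left|right]; apply/imsetP; exists (porbit p i);
      rewrite ?porbitD_l ?porbitD_r //; exact: imset_f.
  case=> /imsetP[_ /imsetP[i _ ->] ->]; [exists (inl i)|exists (inr i)];
    rewrite ?porbitD_l ?porbitD_r //.
have i1 : injective (fun O : {set 'I_r} => [set (inl j : X) | j in O]).
  by apply: imset_inj => i j [].
have i2 : injective (fun O : {set 'I_r} => [set (inr j : X) | j in O]).
  by apply: imset_inj => i j [].
rewrite cardsU (card_imset _ i1) (card_imset _ i2) addnn -mul2n.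
suff -> : [set [set (inl j : X) | j in O] | O : {set 'I_r} in porbits p] :&:
          [set [set (inr j : X) | j in O] | O : {set 'I_r} in porbits p] = set0.
  by rewrite cards0 subn0.
apply/setP => O; rewrite inE in_set0; apply/negP => /andP[].
move=> /imsetP[_ /imsetP[i1' _ ->] ->] /imsetP[_ /imsetP[i2' _ ->]] /setP E.
have := E (inl i1'); rewrite (imset_f _ (porbit_id p i1')).
by move/esym/imsetP => [k _].
Qed.

End T2b.
Section T2c.
Variable r : nat.
Local Notation X := (T2 r).
Local Notation gam := (gamma r).
Local Notation tp := Defs.tperm2.

Lemma xy_id (a b s : {perm 'I_r}) (e e' : 'I_r -> bool) (h : {perm X}) :
  h \in Hr r ->
  ((tp b * tau e) * tp a^-1 = h * (tp s * tau e'))%g ->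
  (Dp a * (Dp b^-1) ^ tau e = (Dp s^-1) ^ (tau e' * tp a))%g.
Proof.
move=> hH E.
have E' : (tp b * tau e = h * (tp s * tau e') * tp a)%g by rewrite -E t_inv mulgKV.
have Hc : (gam ^ (tp b * tau e) = gam ^ (tp s * (tau e' * tp a)))%g.
  by rewrite E' !conjgM gam_Hr.
rewrite !D2 D1 conjMg gam_tau mulgA -(mulgA _ gam gam) gam2 mulg1.
rewrite -conjgM Hc conjMg [(gam ^ (tau e' * tp a))%g]conjgM gam_tau.
by rewrite -conjgM.
Qed.

End T2c.
Section T2d.
Variable r : nat.
Local Notation X := (T2 r).
Local Notation gam := (gamma r).
Local Notation tp := Defs.tperm2.
Implicit Types (p : {perm 'I_r}) (q z : {perm X}).

Definition PP q p := forall w : X,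
  (pi (q w) = p (pi w) /\ pi (q^-1%g w) = p^-1%g (pi w)) \/
  (pi (q w) = p^-1%g (pi w) /\ pi (q^-1%g w) = p (pi w)).

Lemma PP_D p : PP (Dp p) p.
Proof. by move=> w; rewrite Dinv !DpE; case: w => i /=; [left|right]; rewrite ?invgK. Qed.

Lemma pi_tau e (w : X) : pi (tau e w) = pi w.
Proof. by rewrite tauE; case: w => i /=; case: (e i). Qed.

Lemma PP_conj q p z : (forall w, pi (z w) = pi w) -> PP q p -> PP (q ^ z)%g p.
Proof.
move=> Hz Hq w; rewrite -conjVg !conjgE !permM !Hz.
have Hzi : pi (z^-1%g w) = pi w by rewrite -{2}(permKV z w) Hz.
by rewrite -Hzi; apply: Hq.
Qed.

Definition Kab (a b : {perm 'I_r}) : rel 'I_r := [rel i j | (j == a i) || (j == b i)].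

Lemma PP_lift q p (E : rel X) : PP q p -> (forall u, E u (q u)) ->
  forall (w : X) j, (j = p (pi w)) \/ (j = p^-1%g (pi w)) ->
  exists2 w', pi w' = j & connect (symr E) w w'.
Proof.
move=> Hq HE w j Hj.
have c1 : connect (symr E) w (q w) by apply: connect1; rewrite /symr /= HE.
have c2 : connect (symr E) w (q^-1%g w).
  by apply: connect1; rewrite /symr /=; apply/orP; right; rewrite -{2}(permKV q w) HE.
by case: (Hq w) => [[E1 E2]|[E1 E2]]; case: Hj => ->;
  [exists (q w)|exists (q^-1%g w)|exists (q^-1%g w)|exists (q w)].
Qed.

Variables (a b : {perm 'I_r}) (e : 'I_r -> bool).
Local Notation x := (Dp a).
Local Notation y := ((Dp b^-1) ^ tau e)%g.

Lemma PPx : PP x a. Proof. exact: PP_D. Qed.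
Lemma PPy : PP y b^-1. Proof. by apply: PP_conj; [apply: pi_tau|apply: PP_D]. Qed.

Lemma lift_step (w : X) j : symr (Kab a b) (pi w) j ->
  exists2 w', pi w' = j & connect (symr (Exy x y)) w w'.
Proof.
have Ex u : Exy x y u (x u) by rewrite /Exy /= eqxx.
have Ey u : Exy x y u (y u) by rewrite /Exy /= eqxx orbT.
case/orP => /orP[] /eqP Hj.
- by apply: (PP_lift PPx Ex); left.
- by apply: (PP_lift PPy Ey); right; rewrite invgK.
- by apply: (PP_lift PPx Ex); right; rewrite Hj permK.
- by apply: (PP_lift PPy Ey); left; rewrite Hj permK.
Qed.

Lemma proj_conn (u v : X) : connect (symr (Kab a b)) (pi u) (pi v) ->
  connect (symr (Exy x y)) u v || connect (symr (Exy x y)) u (gam v).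
Proof.
pose P := [pred j | [exists w, (pi w == j) && connect (symr (Exy x y)) u w]].
have clP : closed (symr (Kab a b)) P.
  apply: intro_closed; first exact: symr_sym.
  move=> i j Kij /existsP[w /andP[/eqP wi uw]]; rewrite -wi in Kij.
  have [w' w'j ww'] := lift_step Kij.
  by apply/existsP; exists w'; rewrite w'j eqxx /=; apply: connect_trans ww'.
move=> c; have := closed_connect clP c.
have -> : pi u \in P by apply/existsP; exists u; rewrite eqxx connect0.
move/esym/existsP => [w /andP[/eqP wv uw]].
rewrite gamE; clear c; case: w wv uw => i; case: v => j /= -> ->; rewrite ?orbT //.
Qed.

Lemma Nc_xy : Nc (Exy x y) <= 2 * Nc (Kab a b).
Proof.
apply: (Nc_proj (h:=@pi r) (l:=fun i => inl i) (g:=gam)) => // u v.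
exact: proj_conn.
Qed.

Lemma step_K (w : X) : connect (symr (Kab a b)) (pi w) (pi ((x * y)%g w)).
Proof.
rewrite permM.
have H1 : connect (symr (Kab a b)) (pi w) (pi (x w)).
  apply: connect1; case: (PPx w) => [[-> _]|[-> _]]; rewrite /symr /Kab /= ?eqxx //.
  by rewrite permKV eqxx !orbT.
apply: connect_trans H1 _; apply: connect1.
case: (PPy (x w)) => [[-> _]|[-> _]]; rewrite /symr /Kab /= ?invgK ?eqxx ?orbT //.
by rewrite permKV eqxx !orbT.
Qed.

Lemma F2 (s : {perm 'I_r}) (e' : 'I_r -> bool) :
  (x * y = (Dp s^-1) ^ (tau e' * tp a))%g ->
  forall i, connect (symr (Kab a b)) i (s i).
Proof.
move=> Exy_id.
set Z := (tau e' * tp a)%g.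
have HZ j : connect (symr (Kab a b)) j (pi (Z (inl j))).
  rewrite permM tauE tE /=; case: (e' j) => //=.
  by apply: connect1; rewrite /symr /Kab /= eqxx.
have Hi i : connect (symr (Kab a b)) i (s^-1%g i).
  apply: connect_trans (HZ i) _.
  apply: connect_trans (step_K _) _.
  rewrite Exy_id -/Z permJ DpE /=.
  by rewrite symr_sym; apply: HZ.
move=> i; rewrite symr_sym; have := Hi (s i); by rewrite permK.
Qed.

End T2d.
Section Parts.
Variable T : finType.
Implicit Types (A B : {set {set T}}) (u v : T).

Definition RA A : rel T := [rel u v | pblock A u == pblock A v].

Lemma conn_RA A u v : connect (symr (RA A)) u v = (pblock A u == pblock A v).
Proof.
apply/idP/idP; last by move=> H; apply: connect1; rewrite /symr /RA /= H.
pose Q := [pred w | pblock A w == pblock A u].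
have clQ : closed (symr (RA A)) Q.
  move=> x1 y1 /orP[] /eqP E; rewrite !inE E //.
by move=> c; have := closed_connect clQ c; rewrite !inE eqxx eq_sym => <-.
Qed.

Lemma Nc_RA A : partition A [set: T] -> Nc (RA A) = #|A|.
Proof.
move=> pA; rewrite (Nc_count (F := pblock A)); last exact: conn_RA.
suff -> : [set pblock A u | u in T] = A by [].
apply/setP => B; apply/imsetP/idP.
  by case=> u _ ->; apply: pblock_mem; rewrite (cover_partition pA) inE.
move=> BA; have /set0Pn[u uB] := partition_neq0 pA BA.
by exists u => //; rewrite (def_pblock (partition_trivIset pA) BA uB).
Qed.

Lemma pblock_porbits (p : {perm T}) u : pblock (porbits p) u = porbit p u.
Proof.
rewrite /pblock; case: pickP => [B /andP[/imsetP[w _ ->] uw]|].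
  by rewrite /=; apply/eqP; rewrite eq_porbit_mem porbit_sym.
by move/(_ (porbit p u)); rewrite /= imset_f // porbit_id.
Qed.

End Parts.

Section Parts2.
Variable r : nat.
Local Notation T := ('I_r).
Implicit Types (A B : {set {set T}}) (u v : T).

Definition RJ A B : rel T := [rel u v | (pblock A u == pblock A v) || (pblock B u == pblock B v)].

Lemma RJ_sym A B : connect_sym (RJ A B).
Proof. by apply: sym_connect_sym => u v; rewrite /RJ /= ![pblock _ v == _]eq_sym. Qed.

Lemma pjoin_eq A B u v :
  (pblock (pjoin A B) u == pblock (pjoin A B) v) = connect (RJ A B) u v.
Proof.
have sR := RJ_sym A B.
have eqR : {in [set: T] & &, equivalence_rel (connect (RJ A B))}.
  move=> x y z _ _ _; split; first exact: connect0.
  move=> cxy; apply/idP/idP => H; first by apply: connect_trans H; rewrite sR.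
  exact: connect_trans cxy H.
have pP := equivalence_partitionP eqR.
have bl w : pblock (pjoin A B) w = [set z in [set: T] | connect (RJ A B) w z].
  apply: def_pblock; first exact: partition_trivIset pP.
    by apply: imset_f; rewrite inE.
  by rewrite !inE connect0.
rewrite !bl; apply/eqP/idP => [E|c].
  have : v \in [set z in [set: T] | connect (RJ A B) v z] by rewrite !inE connect0.
  by rewrite -E !inE.
apply/setP => z; rewrite !inE; apply/idP/idP => H.
  by apply: connect_trans H; rewrite sR.
exact: connect_trans c H.
Qed.

End Parts2.

Unset Implicit Arguments.
Lemma int_fin (a b c d e : int) : (c + d + e + 1 <= a + b)%R -> (- a - b + c + d + e + 1 <= 0)%R.
Proof.
move=> H.
have -> : (- a - b + c + d + e + 1 = (c + d + e + 1) + (- a - b))%R.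
  by rewrite [RHS]addrC !addrA.
by rewrite -opprD subr_le0.
Qed.

Theorem proposition4p4 (r : nat) (hr : (3 <= r)%N)
  (alpha beta : {perm 'I_r}) (eps : 'I_r -> bool) (sigma : {perm 'I_r})
  (hsigma : is_sigma alpha beta eps sigma)
  (A : {set {set 'I_r}}) (hA : is_setpart A)
  (hsA : refines (zero_part sigma) A)
  (hjoin : pjoin (pjoin A (zero_part alpha)) (zero_part beta) = one_part r) :
  (- (2 * r)%:Z - #|zero_part sigma|%:Z + 2 * #|A|%:Z
     + #|zero_part alpha|%:Z + #|zero_part beta|%:Z + 1 <= 0)%R.
Proof.
case: hsigma => e' [_ [h hH Eq]].
rewrite /Defs.pcomp in Eq.
have xyE := xy_id hH Eq.
set K := Kab alpha beta.
have F1 : (#|porbits alpha| + #|porbits beta| + #|porbits sigma| <= r + 2 * Nc K)%N.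
  have G := genus (Dp alpha) ((Dp beta^-1) ^ tau eps)%g.
  have cX : #|T2 r| = r + r by rewrite /T2 card_sum card_ord.
  rewrite xyE !porbitsJ !porbits_D !porbitsV cX in G.
  have N2 := Nc_xy alpha beta eps.
  move/leP: G; move/leP: N2; rewrite -/K -?plusE -?multE => N2 G; apply/leP; lia.
pose f := [seq (i, alpha i) | i <- enum 'I_r] ++ [seq (i, beta i) | i <- enum 'I_r].
have memf i j : ((i, j) \in f) = (j == alpha i) || (j == beta i).
  rewrite mem_cat; apply/orP/orP => [[]/mapP[k _ [-> ->]]|[]/eqP->]; rewrite ?eqxx;
    [left|right|left|right] => //; by apply: map_f; rewrite mem_enum.
have pA : partition A [set: 'I_r] := hA.
have sub : subrel (connect (symr (Ep sigma))) (connect (symr (RA A))).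
  apply: conn_sub_sym => u v /eqP ->.
  apply: connect1; rewrite /symr /RA /=; apply/orP; left.
  have /forall_inP/(_ (porbit sigma u)) := hsA.
  case/(_ _)/Wrap=> [|/exists_inP[B BA sB]]; first by apply: imset_f.
  have uB : u \in B by apply: (subsetP sB); apply: porbit_id.
  have suB : sigma u \in B.
    by apply: (subsetP sB); have := mem_porbit sigma 1 u; rewrite expg1.
  by rewrite (def_pblock (partition_trivIset pA) BA uB) (def_pblock (partition_trivIset pA) BA suB).
have SM := Nc_submod f sub.
rewrite Nc_porbits Nc_RA // in SM.
have r0 : (0 < r)%N by apply: leq_trans hr.
have N1 : Nc (addL (RA A) f) = 1.
  rewrite (Nc_count (F := fun _ => tt)); last first.
    move=> u v; rewrite eqxx.
    have := pjoin_eq (pjoin A (zero_part alpha)) (zero_part beta) u v.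
    rewrite hjoin /one_part !(def_pblock (trivIset1 _) (set11 _) (in_setT _)) eqxx => /esym c.
    apply: connect_sub c => u1 v1 /orP[].
      rewrite pjoin_eq; apply: connect_sub => u2 v2 /orP[E|].
        by apply: connect1; rewrite /symr /addL /RA /= E.
      rewrite /zero_part !pblock_porbits eq_porbit_mem porbit_sym => H.
      apply: (porbit_conn (q := alpha)) H => w; apply: connect1.
      by rewrite /symr /addL /= memf eqxx !orbT.
    rewrite /zero_part !pblock_porbits eq_porbit_mem porbit_sym => H.
    apply: (porbit_conn (q := beta)) H => w; apply: connect1.
    by rewrite /symr /addL /= memf eqxx !orbT.
  suff -> : [set tt | _ in 'I_r] = [set tt] by rewrite cards1.
  by apply/setP => [[]]; rewrite inE eqxx; apply/imsetP; exists (Ordinal r0).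
have N2 : Nc (addL (Ep sigma) f) = Nc K.
  apply: Nc_conn => u v; apply/idP/idP; apply: conn_sub_sym => u1 v1.
    case/orP => [/eqP ->|]; first exact: (F2 xyE).
    by rewrite memf => H; apply: connect1; rewrite /symr /K /Kab /= H.
  by rewrite /K /Kab /= -memf => H; apply: connect1; rewrite /symr /addL /= H orbT.
rewrite N1 N2 in SM.
have H : (2 * #|A| + #|zero_part alpha| + #|zero_part beta| + 1 <= 2 * r + #|zero_part sigma|)%N.
  rewrite /zero_part; move/leP: SM; move/leP: F1; move/leP: hr.
  rewrite -?plusE -?multE => h1 h2 h3; apply/leP; clearbody K.
  move: h2 h3; move: #|porbits sigma| => S. move: (Nc K) => NK; move: #|porbits alpha| => Al; move: #|porbits beta| => Be; move: #|A| => AA h2 h3; clear -h1 h2 h3; lia.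
apply: int_fin; rewrite !mul2n -!addnn -lez_nat in H.
rewrite mulr_natl mulr2n mul2n -addnn; move: H; rewrite !PoszD; exact.
Qed.
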